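(* For every integer $k\ge2$, the infimum $\alpha_*=\inf_{x\in\Delta^{d-1}}F^k(x)$ is attained at some point of $\Delta^{d-1}$, and $1\le\alpha_*\le 12\cdot3^{k-1}-3$.
   Context: Fix $k\ge2$ and $d=4\cdot3^{k-1}$. $\Delta^{d-1}=\{x=(x_1,\dots,x_d)\in\mathbb{R}^d: x_i>0,\ \sum_i x_i=1\}$. For $j=1,2,3,4$, $I_j=\{(j-1)3^{k-1}+1,\dots,j\cdot3^{k-1}\}$ and $\Sigma_j(x)=\sum_{l\in I_j}x_l$. Let $\sigma(t)=(1-t)/t$ for $t\in(0,1)$. For $i\in\{1,\dots,d\}$ let $j(i)=1$ if $i\equiv0\pmod4$, $j(i)=4$ if $i\equiv1$, $j(i)=3$ if $i\equiv2$, $j(i)=2$ if $i\equiv3\pmod 4$, and set $f_i(x)=\sigma(\Sigma_{j(i)}(x))\,\sigma(x_i)$. Define $F^k(x)=\max_{1\le i\le d}f_i(x)$ on $\Delta^{d-1}$. *)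

(* Defs.v *)
From Stdlib Require Import Reals Lra Lia.
Open Scope R_scope.

(* Vectors x in R^d are functions nat -> R, with coordinates x 1, ..., x d
   (indices outside 1..d are irrelevant). *)

Fixpoint sumto (f : nat -> R) (n : nat) : R :=
  match n with
  | O => 0
  | S n' => sumto f n' + f (S n')
  end.

Fixpoint maxto (g : nat -> R) (n : nat) : R :=
  match n with
  | O => g 1%nat
  | S n' => Rmax (maxto g n') (g (S n'))
  end.

Definition blk (k : nat) : nat := (3 ^ (k - 1))%nat.
Definition dim (k : nat) : nat := (4 * blk k)%nat.

Definition in_simplex (d : nat) (x : nat -> R) : Prop :=
  (forall i, (1 <= i <= d)%nat -> 0 < x i) /\ sumto x d = 1.

Definition Sigma (k j : nat) (x : nat -> R) : R :=
  sumto (fun t => x ((j - 1) * blk k + t)%nat) (blk k).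

Definition sigma (t : R) : R := (1 - t) / t.

Definition jmap (i : nat) : nat :=
  match (i mod 4)%nat with
  | O => 1%nat
  | 1%nat => 4%nat
  | 2%nat => 3%nat
  | _ => 2%nat
  end.

Definition fi (k i : nat) (x : nat -> R) : R :=
  sigma (Sigma k (jmap i) x) * sigma (x i).

Definition Fk (k : nat) (x : nat -> R) : R :=
  maxto (fun i => fi k i x) (dim k).

(* Main.v *)
From Stdlib Require Import Reals Lra Lia Arith.
Require Import Defs.
Open Scope R_scope.

Lemma jmap_S n : jmap (S n) <> jmap n.
Proof.
  unfold jmap. replace (S n) with (n + 1)%nat by lia.
  rewrite Nat.Div0.add_mod by lia.
  assert (H := Nat.mod_upper_bound n 4 ltac:(lia)).
  destruct (n mod 4)%nat as [|[|[|[|r]]]]; simpl; try discriminate; lia.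
Qed.

Lemma jmap_range i : (1 <= jmap i <= 4)%nat.
Proof. unfold jmap. destruct (i mod 4)%nat as [|[|[|[|r]]]]; lia. Qed.

Lemma sumto_ext f g n : (forall t, (1 <= t <= n)%nat -> f t = g t) -> sumto f n = sumto g n.
Proof.
  induction n; intros H; simpl; auto.
  rewrite IHn by (intros; apply H; lia). rewrite H by lia. reflexivity.
Qed.

Lemma sumto_add f a b : sumto f (a + b) = sumto f a + sumto (fun t => f (a + t)%nat) b.
Proof.
  induction b; simpl.
  - rewrite Nat.add_0_r; ring.
  - rewrite Nat.add_succ_r. simpl. rewrite IHb. ring.
Qed.

Lemma sumto_ge f n t : (forall s, (1 <= s <= n)%nat -> 0 < f s) -> (1 <= t <= n)%nat -> f t <= sumto f n.
Proof.
  revert t; induction n; intros t H Ht; [lia|]. simpl.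
  destruct (Nat.eq_dec t (S n)) as [->|Hne].
  - assert (0 <= sumto f n).
    { destruct n. simpl; lra. apply Rle_trans with (f 1%nat).
      left; apply H; lia. apply IHn; [intros; apply H; lia|lia]. }
    lra.
  - assert (f t <= sumto f n) by (apply IHn; [intros; apply H; lia|lia]).
    assert (0 < f (S n)) by (apply H; lia). lra.
Qed.

Lemma sumto_pos f n : (1 <= n)%nat -> (forall s, (1 <= s <= n)%nat -> 0 < f s) -> 0 < sumto f n.
Proof.
  intros Hn H. apply Rlt_le_trans with (f 1%nat). apply H; lia. apply sumto_ge; auto; lia.
Qed.

Lemma sumto_const c n : sumto (fun _ => c) n = INR n * c.
Proof. induction n; simpl sumto; [simpl; ring|]. rewrite IHn, S_INR. ring. Qed.

Lemma sumto_scale f c n : sumto (fun t => f t * c) n = sumto f n * c.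
Proof. induction n; simpl; [ring|]. rewrite IHn. ring. Qed.

Lemma maxto_ge g n i : (1 <= i <= n)%nat -> g i <= maxto g n.
Proof.
  induction n; intros H; [lia|]. simpl.
  destruct (Nat.eq_dec i (S n)) as [->|Hne]. apply Rmax_r.
  destruct n. replace i with 1%nat by lia. apply Rmax_l.
  apply Rle_trans with (maxto g (S n)). apply IHn; lia. apply Rmax_l.
Qed.

Lemma maxto_le g n c : (forall i, (1 <= i <= n)%nat -> g i <= c) -> (1 <= n)%nat -> maxto g n <= c.
Proof.
  induction n; intros H Hn; [lia|]. simpl.
  apply Rmax_lub; [|apply H; lia].
  destruct n. simpl. apply H; lia. apply IHn; [intros; apply H; lia|lia].
Qed.

Lemma maxto_ext g h n : (forall i, (1 <= i <= n)%nat -> g i = h i) -> (1 <= n)%nat -> maxto g n = maxto h n.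
Proof.
  induction n; intros H Hn; [lia|]. simpl.
  rewrite (H (S n)) by lia. f_equal.
  destruct n. simpl. apply H; lia. apply IHn; [intros; apply H; lia|lia].
Qed.

Lemma blk_ge3 k : (2 <= k)%nat -> (3 <= blk k)%nat.
Proof.
  intros Hk. unfold blk. destruct k as [|[|k]]; [lia|lia|].
  replace (S (S k) - 1)%nat with (S k) by lia. simpl.
  assert (3 ^ k <> 0)%nat by (apply Nat.pow_nonzero; lia). lia.
Qed.

Definition pos_on (d : nat) (x : nat -> R) := forall i, (1 <= i <= d)%nat -> 0 < x i.

Lemma Sigma_ext k j x y : (1 <= j <= 4)%nat -> (forall i, (1 <= i <= dim k)%nat -> x i = y i) ->
  Sigma k j x = Sigma k j y.
Proof.
  intros Hj H. unfold Sigma. apply sumto_ext. intros t Ht. apply H.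
  unfold dim. assert ((j - 1) * blk k <= 3 * blk k)%nat by (apply Nat.mul_le_mono_r; lia). revert H0; generalize ((j - 1) * blk k)%nat; intros; lia.
Qed.

Lemma Sigma_term k j x t : (1 <= j <= 4)%nat -> pos_on (dim k) x -> (1 <= t <= blk k)%nat ->
  x ((j - 1) * blk k + t)%nat <= Sigma k j x.
Proof.
  intros Hj Hx Ht. unfold Sigma.
  apply (sumto_ge (fun t => x ((j - 1) * blk k + t)%nat)); auto.
  intros s Hs. apply Hx. unfold dim.
  assert ((j - 1) * blk k <= 3 * blk k)%nat by (apply Nat.mul_le_mono_r; lia).
  revert H; generalize ((j - 1) * blk k)%nat; intros; lia.
Qed.

Lemma Sigma_pos k j x : (2 <= k)%nat -> (1 <= j <= 4)%nat -> pos_on (dim k) x -> 0 < Sigma k j x.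
Proof.
  intros Hk Hj Hx. pose proof (blk_ge3 k Hk).
  apply Rlt_le_trans with (x ((j - 1) * blk k + 1)%nat).
  apply Hx. unfold dim. assert ((j - 1) * blk k <= 3 * blk k)%nat by (apply Nat.mul_le_mono_r; lia).
  revert H0; generalize ((j - 1) * blk k)%nat; intros; lia.
  apply Sigma_term; auto; lia.
Qed.

Lemma Sigma_sum k x : Sigma k 1 x + Sigma k 2 x + Sigma k 3 x + Sigma k 4 x = sumto x (dim k).
Proof.
  unfold dim, Sigma. set (m := blk k).
  replace (4 * m)%nat with (m + m + m + m)%nat by lia.
  rewrite !sumto_add.
  replace (sumto x m) with (sumto (fun t => x ((1 - 1) * m + t)%nat) m)
    by (apply sumto_ext; intros; f_equal; lia).
  replace (sumto (fun t => x (m + t)%nat) m) with (sumto (fun t => x ((2 - 1) * m + t)%nat) m)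
    by (apply sumto_ext; intros; f_equal; lia).
  replace (sumto (fun t => x (m + m + t)%nat) m) with (sumto (fun t => x ((3 - 1) * m + t)%nat) m)
    by (apply sumto_ext; intros; f_equal; lia).
  replace (sumto (fun t => x (m + m + m + t)%nat) m) with (sumto (fun t => x ((4 - 1) * m + t)%nat) m)
    by (apply sumto_ext; intros; f_equal; lia).
  ring.
Qed.

Lemma Sigma_pair k x j j' : (2 <= k)%nat -> in_simplex (dim k) x -> (1 <= j <= 4)%nat -> (1 <= j' <= 4)%nat -> j <> j' ->
  Sigma k j x + Sigma k j' x <= 1.
Proof.
  intros Hk [Hp Hs] Hj Hj' Hne.
  pose proof (Sigma_sum k x) as E. rewrite Hs in E.
  pose proof (Sigma_pos k 1 x Hk ltac:(lia) Hp).
  pose proof (Sigma_pos k 2 x Hk ltac:(lia) Hp).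
  pose proof (Sigma_pos k 3 x Hk ltac:(lia) Hp).
  pose proof (Sigma_pos k 4 x Hk ltac:(lia) Hp).
  destruct j as [|[|[|[|[|j]]]]]; try lia; destruct j' as [|[|[|[|[|j']]]]]; try lia; lra.
Qed.

Lemma Fk_ext k x y : (forall i, (1 <= i <= dim k)%nat -> x i = y i) -> Fk k x = Fk k y.
Proof.
  intros H. unfold Fk. apply maxto_ext; [|unfold dim, blk; pose proof (Nat.pow_nonzero 3 (k-1) ltac:(lia)); lia].
  intros i Hi. unfold fi. rewrite (Sigma_ext k (jmap i) x y (jmap_range i) H), (H i Hi). reflexivity.
Qed.

Lemma sigma_eq t : t <> 0 -> sigma t = / t - 1.
Proof. intros. unfold sigma. field. auto. Qed.

Lemma sigma_prod_ge1 a b : 0 < a -> 0 < b -> a + b <= 1 -> 1 <= sigma a * sigma b.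
Proof.
  intros Ha Hb Hab. unfold sigma.
  assert (E : (1 - a) / a * ((1 - b) / b) - 1 = (1 - a - b) * / (a * b)) by (field; lra).
  assert (0 <= (1 - a - b) * / (a * b)).
  { apply Rmult_le_pos. lra. left. apply Rinv_0_lt_compat. nra. }
  lra.
Qed.

Lemma fi_le_Fk k i x : (1 <= i <= dim k)%nat -> fi k i x <= Fk k x.
Proof. intros. unfold Fk. apply (maxto_ge (fun i => fi k i x)). auto. Qed.

Lemma jmap1 : jmap 1 = 4%nat. Proof. reflexivity. Qed.

Lemma Fk_ge1 k x : (2 <= k)%nat -> in_simplex (dim k) x -> 1 <= Fk k x.
Proof.
  intros Hk Hx. pose proof (blk_ge3 k Hk) as Hm.
  apply Rle_trans with (fi k 1 x); [|apply fi_le_Fk; unfold dim; lia].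
  unfold fi. rewrite jmap1. destruct Hx as [Hp Hs].
  pose proof (Sigma_term k 1 x 1 ltac:(lia) Hp ltac:(lia)) as T1.
  replace ((1 - 1) * blk k + 1)%nat with 1%nat in T1 by lia.
  pose proof (Sigma_sum k x) as E.
  pose proof (Sigma_pos k 1 x Hk ltac:(lia) Hp).
  pose proof (Sigma_pos k 2 x Hk ltac:(lia) Hp).
  pose proof (Sigma_pos k 3 x Hk ltac:(lia) Hp).
  pose proof (Sigma_pos k 4 x Hk ltac:(lia) Hp).
  assert (0 < x 1%nat) by (apply Hp; unfold dim; lia).
  rewrite Rmult_comm. apply sigma_prod_ge1; auto. lra.
Qed.

Lemma coord_lb k x M : (2 <= k)%nat -> in_simplex (dim k) x -> 0 <= M -> Fk k x <= M ->
  forall i, (1 <= i <= dim k)%nat -> / (1 + M * (M + 2)) <= x i.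
Proof.
  intros Hk Hx HM HF i Hi. pose proof (blk_ge3 k Hk) as Hm.
  pose proof Hx as [Hp Hs].
  set (j := jmap i). pose proof (jmap_range i) as Hj. fold j in Hj.
  set (b := if Nat.eqb j 1 then 2%nat else 1%nat).
  assert (Hb : (1 <= b <= 4)%nat /\ b <> j) by (unfold b; destruct (Nat.eqb_spec j 1); lia).
  assert (Hl : exists l t, l = ((b - 1) * blk k + t)%nat /\ (1 <= t <= 2)%nat /\ jmap l <> j).
  { destruct (Nat.eq_dec (jmap ((b - 1) * blk k + 1)%nat) j) as [E|E].
    - exists ((b - 1) * blk k + 2)%nat, 2%nat. split; [reflexivity|split; [lia|]].
      rewrite <- E. replace ((b - 1) * blk k + 2)%nat with (S ((b - 1) * blk k + 1)) by lia.
      apply jmap_S.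
    - exists ((b - 1) * blk k + 1)%nat, 1%nat. auto. }
  destruct Hl as (l & t & El & Ht & Hjl).
  assert (Hbl : ((b - 1) * blk k <= 3 * blk k)%nat) by (apply Nat.mul_le_mono_r; lia).
  assert (Hld : (1 <= l <= dim k)%nat).
  { subst l. unfold dim. revert Hbl; generalize ((b - 1) * blk k)%nat; intros; lia. }
  assert (Hxl : x l <= Sigma k b x) by (subst l; apply Sigma_term; auto; lia).
  pose proof (jmap_range l) as Hjl'.
  assert (S1 : Sigma k j x + Sigma k b x <= 1) by (apply Sigma_pair; auto; lia).
  assert (S2 : Sigma k j x + Sigma k (jmap l) x <= 1) by (apply Sigma_pair; auto).
  assert (P1 : 0 < Sigma k (jmap l) x) by (apply Sigma_pos; auto).
  assert (P2 : 0 < x l) by (apply Hp; auto).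
  assert (P3 : 0 < Sigma k j x) by (apply Sigma_pos; auto).
  assert (Fl : fi k l x <= M) by (eapply Rle_trans; [apply fi_le_Fk; auto|auto]).
  assert (Fi : fi k i x <= M) by (eapply Rle_trans; [apply fi_le_Fk; auto|auto]).
  unfold fi in Fl, Fi. fold j in Fi.
  set (e := 1 - Sigma k j x) in *.
  assert (HM2 : 0 < M + 2) by lra.
  set (q := / (M + 2)).
  assert (Hq : q * (M + 2) = 1) by (unfold q; field; lra).
  assert (Hq0 : 0 < q) by (unfold q; apply Rinv_0_lt_compat; lra).
  assert (He : q <= e).
  { destruct (Rle_lt_dec q e) as [?|Hlt]; auto. exfalso.
    assert (He0 : 0 < e) by (unfold e; lra).
    assert (Ie : M + 2 < / e).
    { rewrite <- (Rinv_inv (M + 2)). apply Rinv_lt_contravar. apply Rmult_lt_0_compat; [lra | apply Rinv_0_lt_compat; lra]. exact Hlt. }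
    assert (I1 : / e <= / Sigma k (jmap l) x) by (apply Rinv_le_contravar; auto; unfold e; lra).
    assert (I2 : / e <= / x l) by (apply Rinv_le_contravar; auto; unfold e; lra).
    rewrite !sigma_eq in Fl by lra.
    nra. }
  assert (Hsj : q <= sigma (Sigma k j x)).
  { rewrite sigma_eq by lra.
    assert (Hq1 : 0 < 1 - q) by (unfold e in He; lra).
    assert (I : / (1 - q) <= / Sigma k j x) by (apply Rinv_le_contravar; auto; unfold e in He; lra).
    assert (U : / (1 - q) * (1 - q) = 1) by (field; lra).
    assert (U1 : 1 <= / (1 - q)).
    { rewrite <- Rinv_1. apply Rinv_le_contravar; lra. }
    nra. }
  destruct (Rle_lt_dec (/ (1 + M * (M + 2))) (x i)) as [?|Hlt]; auto. exfalso.
  assert (Hxi : 0 < x i) by (apply Hp; auto).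
  assert (Hd : 0 < 1 + M * (M + 2)) by nra.
  assert (I : 1 + M * (M + 2) < / x i).
  { rewrite <- (Rinv_inv (1 + M * (M + 2))). apply Rinv_lt_contravar; auto. apply Rmult_lt_0_compat; auto. apply Rinv_0_lt_compat; auto. }
  rewrite (sigma_eq (x i)) in Fi by lra.
  nra.
Qed.

Module MC.
From mathcomp Require Import all_boot all_order all_algebra.
From mathcomp Require Import all_classical all_reals all_analysis.
From mathcomp Require Import Rstruct Rstruct_topology.
Import Order.TTheory GRing.Theory Num.Theory.
Import numFieldNormedType.Exports.
Local Open Scope classical_set_scope.
Local Open Scope ring_scope.

Definition vec (N : nat) := 'rV[R]_(S N).
Definition CC {N : nat} (v : vec N) (g : vec N -> R) := {for v, continuous g}.
Definition P {N : nat} (w : vec N) (n : nat) : R := w ord0 (inord (n - 1)).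
Definition rowOf (N : nat) (x : nat -> R) : vec N := \row_(i < S N) x (S i).

Section S.
Variable N : nat.
Implicit Types v : vec N.

Lemma CC_cst v c : CC v (fun _ => c).
Proof. exact: cst_continuous. Qed.
Lemma CC_P v k : CC v (fun w => P w k).
Proof. exact: coord_continuous. Qed.
Lemma CC_plus v f g : CC v f -> CC v g -> CC v (fun w => Rplus (f w) (g w)).
Proof. move=> hf hg; have H := @cvgD _ R^o _ (nbhs v) _ f g _ _ hf hg; exact: H. Qed.
Lemma CC_mult v f g : CC v f -> CC v g -> CC v (fun w => Rmult (f w) (g w)).
Proof. move=> hf hg; have H := @cvgM _ _ (nbhs v) _ f g _ _ hf hg; exact: H. Qed.
Lemma CC_opp v f : CC v f -> CC v (fun w => Ropp (f w)).
Proof. move=> hf; have H := @cvgN _ R^o _ (nbhs v) _ f _ hf; exact: H. Qed.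
Lemma CC_inv v f : f v <> 0%coqR -> CC v f -> CC v (fun w => Rinv (f w)).
Proof. move=> h hf; have H := @cvgV _ _ (nbhs v) _ f _ (introN eqP h) hf; exact: H. Qed.
Lemma RmaxE x y : Rmax x y = Num.max x y.
Proof.
rewrite /Rmax; case: Rle_dec => h.
  by move/RleP: h => h; rewrite (max_idPr h).
by have /RltP h2 := Rnot_le_lt _ _ h; rewrite (max_idPl (ltW h2)).
Qed.
Lemma CC_max v f g : CC v f -> CC v g -> CC v (fun w => Rmax (f w) (g w)).
Proof.
move=> hf hg.
have -> : (fun w => Rmax (f w) (g w)) = (f \max g) by apply/funext => w; rewrite RmaxE.
exact: (@continuous_max _ _ f g v hf hg).
Qed.

Lemma P_rowOf x n : le 1 n -> le n (S N) -> P (rowOf N x) n = x n.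
Proof.
move=> /ssrnat.leP h1 /ssrnat.leP h2; rewrite /P /rowOf mxE inordK; last by rewrite subn1 prednK.
by rewrite subn1 prednK.
Qed.

Definition inbox (a b : R) (v : vec N) :=
  forall n, le 1 n -> le n (S N) -> Rle a (P v n) /\ Rle (P v n) b.

Lemma box_min (a b : R) (G : vec N -> R) :
  Rle a b ->
  (forall v, inbox a b v -> CC v G) ->
  exists v, inbox a b v /\ forall w, inbox a b w -> Rle (G v) (G w).
Proof.
move=> /RleP ab cG.
have Pi (w : vec N) (i : 'I_(S N)) : w ord0 i = P w (S i).
  by rewrite /P subn1 /= inord_val.
have boxE (v : vec N) : inbox a b v <-> (forall i : 'I_(S N), a <= v ord0 i <= b).
  split.
    move=> H i; rewrite Pi; have [/RleP h1 /RleP h2] := H (S i) (le_n_S _ _ (Nat.le_0_l _)) (ssrnat.ltP (ltn_ord i)).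
    by rewrite h1 h2.
  move=> H n /ssrnat.leP h1 /ssrnat.leP h2.
  have hn : (n - 1 < S N)%N by rewrite subn1 prednK.
  have := H (Ordinal hn); rewrite Pi /= subn1 prednK // => /andP [/RleP h3 /RleP h4].
  by [].
pose A := [set v : vec N | forall i, `[a, b]%classic (v ord0 i)].
have cA : compact A.
  by apply: (@rV_compact _ (S N) (fun=> `[a, b]%classic)) => i; exact: segment_compact.
have A0 : A !=set0.
  by exists (const_mx a) => i /=; rewrite mxE in_itv /= lexx ab.
have inA v : v \in A <-> inbox a b v.
  rewrite boxE inE /A /=; split => H i; have := H i; by rewrite ?in_itv /=.
have [c cA' cmin] := compact_EVT_min A0 cA (continuous_in_subspaceT (fun v vA => cG v (proj1 (inA v) vA))).
exists c; split; first by apply/inA.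
by move=> w wA; apply/RleP; apply: cmin; apply/inA.
Qed.
End S.
End MC.

Section Cont.
Variable N : nat.

Lemma CC_sumto (v : MC.vec N) (g : nat -> MC.vec N -> R) n :
  (forall t, (1 <= t <= n)%nat -> MC.CC v (g t)) -> MC.CC v (fun w => sumto (fun t => g t w) n).
Proof.
  induction n; intros H.
  - exact (MC.CC_cst N v 0).
  - exact (MC.CC_plus N v _ _ (IHn (fun t Ht => H t ltac:(lia))) (H (S n) ltac:(lia))).
Qed.

Lemma CC_maxto (v : MC.vec N) (g : nat -> MC.vec N -> R) n :
  (1 <= n)%nat -> (forall t, (1 <= t <= n)%nat -> MC.CC v (g t)) -> MC.CC v (fun w => maxto (fun t => g t w) n).
Proof.
  induction n; intros Hn H; [lia|].
  destruct n.
  - exact (MC.CC_max N v _ _ (H 1%nat ltac:(lia)) (H 1%nat ltac:(lia))).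
  - exact (MC.CC_max N v _ _ (IHn ltac:(lia) (fun t Ht => H t ltac:(lia))) (H (S (S n)) ltac:(lia))).
Qed.

Lemma CC_sigma (v : MC.vec N) f : f v <> 0 -> MC.CC v f -> MC.CC v (fun w => sigma (f w)).
Proof.
  intros H Hf. unfold sigma, Rdiv, Rminus.
  apply (MC.CC_mult N v (fun w => 1 + - f w) (fun w => / f w)).
  - apply (MC.CC_plus N v (fun _ => 1) (fun w => - f w)). apply MC.CC_cst. apply MC.CC_opp; auto.
  - apply MC.CC_inv; auto.
Qed.
End Cont.

Definition Xv {N : nat} (d : nat) (w : MC.vec N) (n : nat) : R := MC.P w n / sumto (MC.P w) d.

Lemma CC_X N d (v : MC.vec N) n : sumto (MC.P v) d <> 0 -> MC.CC v (fun w => Xv d w n).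
Proof.
  intros H. unfold Xv, Rdiv.
  apply (MC.CC_mult N v (fun w => MC.P w n) (fun w => / sumto (MC.P w) d)).
  apply MC.CC_P. apply MC.CC_inv; auto.
  apply (CC_sumto N v (fun t w => MC.P w t)). intros; apply MC.CC_P.
Qed.

Lemma dim_pos k : (2 <= k)%nat -> (12 <= dim k)%nat.
Proof. intros Hk. pose proof (blk_ge3 k Hk). unfold dim. lia. Qed.

Lemma CC_G k (v : MC.vec (dim k - 1)) : (2 <= k)%nat ->
  pos_on (dim k) (Xv (dim k) v) -> sumto (MC.P v) (dim k) <> 0 ->
  MC.CC v (fun w => Fk k (Xv (dim k) w)).
Proof.
  intros Hk Hp HT. unfold Fk.
  apply (CC_maxto _ v (fun i w => fi k i (Xv (dim k) w))). pose proof (dim_pos k Hk); lia.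
  intros i Hi. unfold fi.
  apply (MC.CC_mult _ v (fun w => sigma (Sigma k (jmap i) (Xv (dim k) w))) (fun w => sigma (Xv (dim k) w i))).
  - apply CC_sigma. pose proof (Sigma_pos k (jmap i) _ Hk (jmap_range i) Hp). lra.
    unfold Sigma. apply (CC_sumto _ v (fun t w => Xv (dim k) w ((jmap i - 1) * blk k + t)%nat)).
    intros; apply CC_X; auto.
  - apply CC_sigma. pose proof (Hp i Hi); lra. apply CC_X; auto.
Qed.

Lemma Fk_unif k : (2 <= k)%nat -> Fk k (fun _ => / INR (dim k)) <= 3 * INR (dim k) - 3.
Proof.
  intros Hk. pose proof (dim_pos k Hk) as Hd.
  assert (Hd' : 12 <= INR (dim k)) by (replace 12 with (INR 12) by (simpl; ring); apply le_INR; lia).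
  unfold Fk. apply maxto_le; [|lia]. intros i Hi. unfold fi, Sigma.
  rewrite sumto_const.
  assert (E : INR (blk k) * / INR (dim k) = / 4).
  { unfold dim. rewrite mult_INR. replace (INR 4) with 4 by (simpl; ring).
    assert (0 < INR (blk k)) by (apply lt_0_INR; pose proof (blk_ge3 k Hk); lia).
    field. lra. }
  rewrite E. rewrite !sigma_eq. rewrite !Rinv_inv. right. ring.
  apply Rinv_neq_0_compat; lra. lra.
Qed.

Theorem mainTheorem5 : forall k : nat, (2 <= k)%nat ->
  exists x0 : nat -> R,
    in_simplex (dim k) x0 /\
    (forall x : nat -> R, in_simplex (dim k) x -> Fk k x0 <= Fk k x) /\
    1 <= Fk k x0 /\ Fk k x0 <= 12 * 3 ^ (k - 1) - 3.
Proof.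
  intros k Hk.
  pose proof (dim_pos k Hk) as Hd.
  set (d := dim k) in *.
  set (N := (d - 1)%nat).
  assert (HN : S N = d) by (unfold N; lia).
  assert (Hd' : 12 <= INR d) by (replace 12 with (INR 12) by (simpl; ring); apply le_INR; lia).
  set (M := 3 * INR d - 3).
  assert (HM : 0 <= M) by (unfold M; lra).
  set (a := / (1 + M * (M + 2))).
  assert (Ha : 0 < a) by (unfold a; apply Rinv_0_lt_compat; nra).
  assert (Ha1 : a <= / INR d).
  { unfold a. apply Rinv_le_contravar. lra. assert (EM : M = 3 * INR d - 3) by reflexivity. nra. }
  assert (Hd1 : / INR d <= 1). { rewrite <- Rinv_1. apply Rinv_le_contravar; lra. }
  set (G := fun w : MC.vec N => Fk k (Xv d w)).
  destruct (MC.box_min N a 1 G ltac:(lra)) as [v [Hv Hmin]].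
  { intros v Hv.
    assert (Hpos : forall n, (1 <= n <= d)%nat -> 0 < MC.P v n).
    { intros n Hn. destruct (Hv n ltac:(lia) ltac:(lia)). lra. }
    assert (HT : 0 < sumto (MC.P v) d) by (apply sumto_pos; auto; lia).
    apply CC_G; [auto| |apply Rgt_not_eq; exact HT]. intros n Hn. unfold Xv. apply Rdiv_lt_0_compat; auto. }
  assert (Hpos : forall n, (1 <= n <= d)%nat -> 0 < MC.P v n).
  { intros n Hn. destruct (Hv n ltac:(lia) ltac:(lia)). lra. }
  assert (HT : 0 < sumto (MC.P v) d) by (apply sumto_pos; auto; lia).
  set (x0 := Xv d v).
  assert (Hx0 : in_simplex d x0).
  { split. intros n Hn. unfold x0, Xv. apply Rdiv_lt_0_compat; auto.
    unfold x0, Xv, Rdiv. rewrite sumto_scale. field. lra. }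
  set (u := fun _ : nat => / INR d).
  set (wu := MC.rowOf N u).
  assert (Pwu : forall n, (1 <= n <= d)%nat -> MC.P wu n = / INR d).
  { intros n Hn. unfold wu. rewrite MC.P_rowOf by lia. reflexivity. }
  assert (Hwu : MC.inbox N a 1 wu).
  { intros n H1 H2. rewrite Pwu by lia. lra. }
  assert (Gwu : G wu <= M).
  { unfold G. rewrite (Fk_ext k _ u). apply Fk_unif; auto.
    intros i Hi. unfold Xv, u.
    rewrite (sumto_ext _ (fun _ => / INR d)) by (intros; apply Pwu; auto).
    rewrite sumto_const, Pwu by auto. field. lra. }
  assert (Hbest : Fk k x0 <= M) by (apply Rle_trans with (G wu); [apply Hmin; auto|auto]).
  exists x0. split; [exact Hx0|]. split; [|split].
  - intros x Hx.
    destruct (Rle_lt_dec M (Fk k x)) as [HM'|HM']; [lra|].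
    pose proof (coord_lb k x M Hk Hx HM (Rlt_le _ _ HM')) as Hlb. fold a in Hlb.
    set (wx := MC.rowOf N x).
    assert (Pwx : forall n, (1 <= n <= d)%nat -> MC.P wx n = x n).
    { intros n Hn. unfold wx. apply MC.P_rowOf; lia. }
    assert (Hwx : MC.inbox N a 1 wx).
    { intros n H1 H2. rewrite Pwx by lia. split. apply Hlb; lia.
      destruct Hx as [Hp Hs]. rewrite <- Hs. apply sumto_ge; auto; lia. }
    apply Rle_trans with (G wx); [apply Hmin; auto|].
    right. unfold G. apply Fk_ext. intros i Hi. unfold Xv.
    rewrite (sumto_ext _ x) by (intros; apply Pwx; auto).
    destruct Hx as [_ Hs]. rewrite Hs, Pwx by auto. field.
  - apply Fk_ge1; auto.
  - apply Rle_trans with M; auto. unfold M, d, dim, blk.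
    rewrite mult_INR, pow_INR. replace (INR 4) with 4 by (simpl; ring).
    replace (INR 3) with 3 by (simpl; ring). lra.
Qed.
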